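(* For every finite-dimensional bipartite quantum channel $\mathcal{N}_{A'B'\to AB}$, $$\log|A'|\le S(R_AA|R_BB)_{\Phi^{\mathcal{N}}}-S^{\leftrightarrow}[A|B]_{\mathcal{N}}.$$
   Context: $\Phi^{\mathcal{N}}_{R_AAR_BB}=\mathcal{N}(\Phi_{R_AA'}\otimes\Phi_{R_BB'})$ with $\Phi$ the normalized maximally entangled state, $R_A\simeq A'$, $R_B\simeq B'$. $D$ is the Umegaki relative entropy. For completely positive maps $\mathcal{K},\mathcal{L}$ from $A'B'$ to $AB$, the bidirectional channel divergence is $D^{\leftrightarrow}[\mathcal{K}\Vert\mathcal{L}]:=\sup_{\rho_{R_AA'},\omega_{R_BB'}}D(\mathcal{K}(\rho\otimes\omega)\Vert\mathcal{L}(\rho\otimes\omega))$, supremum over product states with arbitrary reference systems $R_A,R_B$. With $\mathcal{R}_{A'\to A}(Y)=\operatorname{tr}(Y)\mathbbm{1}_A$, the bidirectional von Neumann conditional entropy is $S^{\leftrightarrow}[A|B]_{\mathcal{N}}:=-\inf_{\mathcal{M}\in\mathrm{Q}(B',B)}D^{\leftrightarrow}[\mathcal{N}\Vert\mathcal{R}_{A'\to A}\otimes\mathcal{M}_{B'\to B}]$. For states, $S(X|Y)=S(XY)-S(Y)$. *)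

(* Defs.v *)
From HB Require Import structures.
From mathcomp Require Import all_boot all_order all_algebra.
From mathcomp Require Import spectral.
From mathcomp Require Import complex.
From mathcomp Require Import boolp classical_sets reals constructive_ereal ereal exp.
Set Implicit Arguments. Unset Strict Implicit. Unset Printing Implicit Defensive.
Import Order.TTheory GRing.Theory Num.Theory.
Local Open Scope ring_scope.

Section QuantumDefs.
Variable R : realType.
Local Notation C := (R[i]).

(* Operators on the finite-dimensional Hilbert space C^T (T a finite
   basis set); an operator is a #|T| x #|T| complex matrix, whose rows and
   columns are indexed by T through enum_rank. *)
Definition Op (T : finType) := 'M[C]_#|T|.

Definition ent (T : finType) (X : Op T) (x y : T) : C :=
  X (enum_rank x) (enum_rank y).

Definition opm (T : finType) (f : T -> T -> C) : Op T :=
  \matrix_(i, j) f (enum_val i) (enum_val j).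

Definition adj m n (X : 'M[C]_(m, n)) : 'M[C]_(n, m) := map_mx Num.conj (trmx X).

Definition psd (T : finType) (X : Op T) : Prop :=
  adj X = X /\ forall u : 'rV[C]_#|T|, 0 <= (u *m X *m adj u) 0 0.

Definition is_state (T : finType) (X : Op T) : Prop := psd X /\ \tr X = 1.

Definition tens (T1 T2 : finType) (X : Op T1) (Y : Op T2) : Op (T1 * T2)%type :=
  opm (fun p q => ent X p.1 q.1 * ent Y p.2 q.2).

Definition Eop (T : finType) (x y : T) : Op T :=
  opm (fun u v => ((u == x) && (v == y))%:R).

(* tensor product F (x) G of linear maps F : L(A1) -> L(A2), G : L(B1) -> L(B2),
   defined by linear extension from matrix units *)
Definition tensmap (A1 A2 B1 B2 : finType)
    (F : Op A1 -> Op A2) (G : Op B1 -> Op B2) (X : Op (A1 * B1)%type) : Op (A2 * B2)%type :=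
  opm (fun p q => \sum_(x : A1) \sum_(x' : A1) \sum_(y : B1) \sum_(y' : B1)
         ent X (x, y) (x', y') * ent (F (Eop x x')) p.1 q.1
                               * ent (G (Eop y y')) p.2 q.2).

Definition idmap (T : finType) (X : Op T) : Op T := X.

Definition is_linear (T1 T2 : finType) (F : Op T1 -> Op T2) : Prop :=
  forall (a : C) (X Y : Op T1), F (a *: X + Y) = a *: F X + F Y.

Definition is_CP (T1 T2 : finType) (F : Op T1 -> Op T2) : Prop :=
  forall (Rf : finType) (X : Op (Rf * T1)%type), psd X -> psd (tensmap (@idmap Rf) F X).

Definition is_TP (T1 T2 : finType) (F : Op T1 -> Op T2) : Prop :=
  forall X : Op T1, \tr (F X) = \tr X.

Definition is_channel (T1 T2 : finType) (F : Op T1 -> Op T2) : Prop :=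
  [/\ is_linear F, is_CP F & is_TP F].

Definition ptrace1 (T1 T2 : finType) (X : Op (T1 * T2)%type) : Op T2 :=
  opm (fun y y' => \sum_(x : T1) ent X (x, y) (x, y')).

Definition mid_idx (P Q U V : finType) (z : ((P * U) * (Q * V))%type) : ((P * Q) * (U * V))%type :=
  ((z.1.1, z.2.1), (z.1.2, z.2.2)).
Definition mid (P Q U V : finType) (X : Op ((P * Q) * (U * V))%type) : Op ((P * U) * (Q * V))%type :=
  opm (fun z w => ent X (mid_idx z) (mid_idx w)).

Definition maxent (T : finType) : Op (T * T)%type :=
  opm (fun p q => ((p.1 == p.2) && (q.1 == q.2))%:R / #|T|%:R).

Definition fcalc n (f : C -> C) (X : 'M[C]_n) : 'M[C]_n :=
  invmx (spectralmx X) *m diag_mx (map_mx f (spectral_diag X)) *m spectralmx X.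

(* logarithm on the support (eigenvalue 0 is sent to 0) *)
Definition logc (z : C) : C := if 0 < @complex.Re R z then ((ln (@complex.Re R z))%:C)%C else 0.

Definition xlnx (x : R) : R := if 0 < x then x * ln x else 0.

Definition vnS (T : finType) (X : Op T) : R :=
  - \sum_(i < #|T|) xlnx (@complex.Re R (spectral_diag X 0 i)).

Definition condS (T1 T2 : finType) (X : Op (T1 * T2)%type) : R :=
  vnS X - vnS (ptrace1 X).

(* Umegaki relative entropy D(rho||sigma) = tr rho (log rho - log sigma) if
   supp rho <= supp sigma, +oo otherwise (for positive semidefinite operators,
   the row-space inclusion (rho <= sigma)%MS is the support inclusion). *)
Definition relent (T : finType) (X Y : Op T) : \bar R :=
  if (X <= Y)%MS then
    (@complex.Re R (\tr (X *m fcalc logc X)) - @complex.Re R (\tr (X *m fcalc logc Y)))%:E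
  else +oo%E.

Definition bimap (A' B' A B RA RB : finType) (K : Op (A' * B')%type -> Op (A * B)%type)
    (X : Op ((RA * A') * (RB * B'))%type) : Op ((RA * A) * (RB * B))%type :=
  mid (tensmap (@idmap (RA * RB)%type) K (mid X)).

Definition bidiv (A' B' A B : finType) (K L : Op (A' * B')%type -> Op (A * B)%type) : \bar R :=
  ereal_sup [set d | exists (RA RB : finType) (rho : Op (RA * A')%type) (om : Op (RB * B')%type),
     [/\ is_state rho, is_state om &
         d = relent (bimap K (tens rho om)) (bimap L (tens rho om))]].

Definition trmap (T1 T2 : finType) (Y : Op T1) : Op T2 := \tr Y *: 1%:M.

Definition biS (A' B' A B : finType) (N : Op (A' * B')%type -> Op (A * B)%type) : \bar R :=
  (- ereal_inf [set d | exists M : Op B' -> Op B,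
       is_channel M /\ d = bidiv N (tensmap (@trmap A' A) M)])%E.

Definition choi (A' B' A B : finType) (N : Op (A' * B')%type -> Op (A * B)%type)
  : Op ((A' * A) * (B' * B))%type :=
  bimap N (tens (maxent A') (maxent B')).

End QuantumDefs.

(* Main.v *)
Require Import Defs.
From HB Require Import structures.
From mathcomp Require Import all_boot all_order all_algebra.
From mathcomp Require Import spectral complex.
From mathcomp Require Import boolp classical_sets reals constructive_ereal ereal exp.
From mathcomp Require Import ring lra.
Set Implicit Arguments. Unset Strict Implicit. Unset Printing Implicit Defensive.
Import Order.TTheory GRing.Theory Num.Theory.
Local Open Scope ring_scope.
Local Open Scope sesquilinear_scope.

Section S.
Variable R : realType.
Local Notation C := (R[i]).
Local Notation Op := (Op R).

Lemma ent_opm (T : finType) (f : T -> T -> C) x y : ent (opm f) x y = f x y.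
Proof. by rewrite /ent /opm mxE !enum_rankK. Qed.

Lemma sum_ordT (T : finType) (F : 'I_#|T| -> C) :
  \sum_(k < #|T|) F k = \sum_(t : T) F (enum_rank t).
Proof. rewrite (reindex (@enum_rank T)) //; exists (@enum_val T T) => i _. exact: enum_rankK. exact: enum_valK. Qed.

Lemma opP (T : finType) (X Y : Op T) : (forall x y, ent X x y = ent Y x y) -> X = Y.
Proof. by move=> H; apply/matrixP => i j; rewrite -(enum_valK i) -(enum_valK j); apply: H. Qed.

Lemma ent_mul (T : finType) (X Y : Op T) x y : ent (X *m Y) x y = \sum_z ent X x z * ent Y z y.
Proof. by rewrite /ent mxE sum_ordT. Qed.

Lemma tr_ent (T : finType) (X : Op T) : \tr X = \sum_x ent X x x.
Proof. by rewrite /mxtrace sum_ordT. Qed.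

Lemma adjE m n (X : 'M[C]_(m, n)) : adj X = X ^t*.
Proof. by []. Qed.
End S.

Section S2.
Variable R : realType.
Local Notation C := (R[i]).

Lemma unitary_r n (W : 'M[C]_n) : W \is unitarymx -> W *m W^t* = 1%:M.
Proof. by move/unitarymxP. Qed.

Lemma unitary_l n (W : 'M[C]_n) : W \is unitarymx -> W^t* *m W = 1%:M.
Proof. by rewrite -trmxC_unitary => /unitarymxP; rewrite trmxCK. Qed.

Lemma fcalc_uniq n (Y W : 'M[C]_n) (h : 'rV[C]_n) (f : C -> C) :
  W \is unitarymx -> Y = W^t* *m diag_mx h *m W ->
  fcalc f Y = W^t* *m diag_mx (map_mx f h) *m W.
Proof.
move=> Wu HY.
have Ynormal : Y \is normalmx.
  apply/orthomx_spectral_subproof; exists (W, h) => //=.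
  by rewrite invmx_unitary.
have HP := orthomx_spectralP Ynormal.
rewrite /fcalc.
set P := spectralmx Y in HP *; set e := spectral_diag Y in HP *.
have Pu : P \is unitarymx by apply: spectral_unitarymx.
have Punit : P \in unitmx by apply: unitarymx_unit.
set Z := P *m W^t*.
have EZ : diag_mx e *m Z = Z *m diag_mx h.
  have := congr1 (fun M => P *m M *m W^t*) HP.
  rewrite {1}HY !mulmxA mulmxV // mul1mx -!mulmxA unitary_r // mulmx1.
  by rewrite /Z !mulmxA => ->.
have ZW : Z *m W = P by rewrite /Z -mulmxA unitary_l // mulmx1.
have PZ : invmx P *m Z = W^t* by rewrite /Z mulmxA mulVmx // mul1mx.
clearbody Z.
have fEZ : diag_mx (map_mx f e) *m Z = Z *m diag_mx (map_mx f h).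
  apply/matrixP => i j; have /matrixP/(_ i j) := EZ.
  rewrite !mul_diag_mx !mul_mx_diag !mxE => Hij.
  have [->|nz] := eqVneq (Z i j) 0; first by rewrite mulr0 mul0r.
  have -> : e 0 i = h 0 j by apply: (mulIf nz); rewrite Hij mulrC.
  by rewrite mulrC.
by rewrite -{2}ZW !mulmxA -(mulmxA _ _ Z) fEZ mulmxA PZ.
Qed.
End S2.

Section S3.
Variable R : realType.
Local Notation C := (R[i]).

Lemma adj_mul n (X Y : 'M[C]_n) : (X *m Y)^t* = Y^t* *m X^t*.
Proof. by rewrite trmx_mul map_mxM. Qed.

Lemma tr_dd n (W : 'M[C]_n) (a b : 'rV[C]_n) :
  \tr (diag_mx a *m W *m diag_mx b *m W^t*) =
  \sum_i \sum_j a 0 i * b 0 j * (W i j * Num.conj (W i j)).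
Proof.
rewrite /mxtrace; apply: eq_bigr => i _.
rewrite mxE; apply: eq_bigr => j _.
rewrite mul_mx_diag mxE mul_diag_mx !mxE.
by rewrite -!mulrA; congr (_ * _); rewrite mulrCA.
Qed.

Lemma tr_formula n (U V : 'M[C]_n) (a b : 'rV[C]_n) :
  \tr ((U^t* *m diag_mx a *m U) *m (V^t* *m diag_mx b *m V)) =
  \sum_i \sum_j a 0 i * b 0 j * ((U *m V^t*) i j * Num.conj ((U *m V^t*) i j)).
Proof.
Time rewrite -(tr_dd (U *m V^t*) a b).
Time rewrite adj_mul trmxCK.
have E : U^t* *m diag_mx a *m U *m (V^t* *m diag_mx b *m V) = U^t* *m (diag_mx a *m U *m V^t* *m diag_mx b *m V).
  Time by rewrite !mulmxA.
Time rewrite E.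
Time rewrite (mxtrace_mulC (U^t*) (diag_mx a *m U *m V^t* *m diag_mx b *m V)).
Time by rewrite !mulmxA.
Qed.
End S3.

Section S4.
Variable R : realType.
Local Notation C := (R[i]).
Local Notation Op := (Op R).

Lemma psd_normal (T : finType) (X : Op T) : psd X -> X \is normalmx.
Proof. by move=> [HX _]; apply/normalmxP; rewrite -adjE HX. Qed.

Lemma psd_decomp (T : finType) (X : Op T) : psd X ->
  X = (spectralmx X)^t* *m diag_mx (spectral_diag X) *m spectralmx X.
Proof.
move=> /psd_normal /orthomx_spectralP {1}->.
by rewrite invmx_unitary // spectral_unitarymx.
Qed.

Lemma row_quad n (P X : 'M[C]_n) i :
  (row i P *m X *m (row i P)^t*) 0 0 = (P *m X *m P^t*) i i.
Proof. by rewrite !mxE; apply: eq_bigr => k _; rewrite !mxE; congr (_ * _); apply: eq_bigr => l _; rewrite !mxE. Qed.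

Lemma psd_eig_ge0 (T : finType) (X : Op T) i : psd X -> 0 <= spectral_diag X 0 i.
Proof.
move=> Xp; have [_ Hq] := Xp.
have := Hq (row i (spectralmx X)); rewrite adjE row_quad.
set P := spectralmx X.
have Pu : P \is unitarymx by apply: spectral_unitarymx.

rewrite {1}(psd_decomp Xp) -/P !mulmxA unitary_r // mul1mx -mulmxA unitary_r // mulmx1.
by rewrite mxE eqxx mulr1n.
Qed.

Lemma Cge0_real (z : C) : 0 <= z -> z = ((complex.Re z)%:C)%C /\ 0 <= complex.Re z.
Proof. by case: z => a b; rewrite lecE /= => /andP[/eqP -> ->]. Qed.

End S4.

Section S5.
Variable R : realType.

Lemma ln_le_sub1 (y : R) : 0 < y -> ln y <= y - 1.
Proof.
move=> y0; have := @le_ln1Dx R (y - 1).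
rewrite [1 + _]addrC subrK; apply; lra.
Qed.

Lemma ln_ratio (a b : R) : 0 < a -> 0 < b -> ln a - ln b <= a / b - 1.
Proof.
move=> a0 b0; rewrite -ln_div ?posrE //; apply: ln_le_sub1.
by apply: divr_gt0.
Qed.

Lemma tangent_ln (e r : R) : 0 < e -> 0 < r -> ln e <= ln r + e / r - 1.
Proof. move=> e0 r0; have := ln_ratio e0 r0; lra. Qed.

Lemma gibbs_ln (d r : R) : 0 < d -> 0 < r -> d * ln r <= d * ln d + r - d.
Proof.
move=> d0 r0; have := ln_ratio r0 d0 => H.
have : d * (ln r - ln d) <= d * (r / d - 1) by rewrite ler_pM2l.
rewrite mulrBr mulrBr mulr1 mulrCA divff ?mulr1 ?gt_eqF //; lra.
Qed.

Lemma klein n (d e : 'I_n -> R) (w : 'I_n -> 'I_n -> R) :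
  (forall i, 0 <= d i) -> (forall j, 0 <= e j) -> (forall i j, 0 <= w i j) ->
  (forall i, \sum_j w i j = 1) -> (forall j, \sum_i w i j = 1) ->
  \sum_i d i = 1 -> \sum_j e j = 1 ->
  (forall i j, 0 < d i -> e j = 0 -> w i j = 0) ->
  \sum_i \sum_j d i * w i j * (if 0 < e j then ln (e j) else 0) <= \sum_i xlnx (d i).
Proof.
move=> d0 e0 w0 wr wc sd se supp.
pose r i := \sum_j w i j * e j.
have step : forall i, \sum_j d i * w i j * (if 0 < e j then ln (e j) else 0)
                      <= xlnx (d i) + r i - d i.
  move=> i; have r0 : 0 <= r i by apply: sumr_ge0 => j _; rewrite mulr_ge0.
  have [di0|] := ltrP 0 (d i); last first.
    move=> dle; have -> : d i = 0 by apply/le_anti; rewrite dle d0.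
    rewrite big1; last by move=> j _; rewrite !mul0r.
    by rewrite /xlnx ltxx add0r subr0.
  have rpos : 0 < r i.
    rewrite lt_def r0 andbT; apply/eqP => r00.
    have : \sum_j w i j = 0.
      apply: big1 => j _.
      have [ej|] := ltrP 0 (e j).
        have : w i j * e j = 0.
          by apply: (psumr_eq0P _ r00) => // k _; rewrite mulr_ge0.
        by move/eqP; rewrite mulf_eq0 (gt_eqF ej) orbF => /eqP.
      by move=> ele; apply: supp => //; apply/le_anti; rewrite ele e0.
    by rewrite wr => /eqP; rewrite oner_eq0.
  have : \sum_j w i j * (if 0 < e j then ln (e j) else 0) <= ln (r i).
    apply: (@le_trans _ _ (\sum_j w i j * (ln (r i) + e j / r i - 1))).
      apply: ler_sum => j _.
      have [ej|ele] := ltrP 0 (e j).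
        by rewrite ler_wpM2l // tangent_ln.
      have -> : w i j = 0 by apply: supp => //; apply/le_anti; rewrite ele e0.
      by rewrite !mul0r.
    rewrite (eq_bigr (fun j => w i j * (ln (r i) - 1) + (w i j * e j) / r i)); last first.
      by move=> j _; ring.
    rewrite big_split /= -big_distrl /= wr mul1r -mulr_suml -/(r i) divff ?gt_eqF //; lra.
  move=> H.
  rewrite (eq_bigr (fun j => d i * (w i j * (if 0 < e j then ln (e j) else 0)))); last first.
    by move=> j _; rewrite mulrA.
  rewrite -mulr_sumr; apply: le_trans (ler_wpM2l (d0 i) H) _.
  rewrite /xlnx di0; have := gibbs_ln di0 rpos; lra.
apply: le_trans (ler_sum _ (fun i _ => step i)) _.
have Hr : \sum_i r i = 1.
  rewrite /r exchange_big /= -se; apply: eq_bigr => j _.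
  by rewrite -mulr_suml wc mul1r.
rewrite big_split /= big_split /= sumrN Hr sd; lra.
Qed.
End S5.

Section S6.
Variable R : realType.
Local Notation C := (R[i]).
Local Notation Op := (Op R).
Local Notation Re := (@complex.Re R).

Lemma ReD (x y : C) : Re (x + y) = Re x + Re y.
Proof. by case: x; case: y. Qed.

Lemma Re_sum (I : finType) (F : I -> C) : Re (\sum_i F i) = \sum_i Re (F i).
Proof. exact: (big_morph Re ReD). Qed.

Lemma Re_rM (r : R) (z : C) : Re ((r%:C)%C * z) = r * Re z.
Proof. by case: z => a b /=; rewrite mul0r subr0. Qed.

Lemma Re_r (r : R) : Re ((r%:C)%C) = r.
Proof. by []. Qed.

Lemma logc_r (r : R) : @logc R ((r%:C)%C) = if 0 < r then ((ln r)%:C)%C else 0.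
Proof. by []. Qed.

Lemma fcalc_decomp (T : finType) (X : Op T) f : psd X ->
  fcalc f X = (spectralmx X)^t* *m diag_mx (map_mx f (spectral_diag X)) *m spectralmx X.
Proof. by move=> _; rewrite /fcalc invmx_unitary // spectral_unitarymx. Qed.

Lemma tr_xlogx (T : finType) (X : Op T) : psd X ->
  Re (\tr (X *m fcalc (@logc R) X)) = - vnS X.
Proof.
move=> Xp; rewrite /vnS opprK (fcalc_decomp _ Xp) {1}(psd_decomp Xp) tr_formula.
rewrite unitary_r ?spectral_unitarymx // Re_sum; apply: eq_bigr => i _.
rewrite (bigD1 i) //= big1 ?addr0; last first.
  by move=> j /negbTE nij; rewrite !mxE eq_sym nij mulr0n mul0r mulr0.
rewrite !mxE eqxx mulr1n conjC1 !mulr1.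
have [E ge0] := Cge0_real (psd_eig_ge0 i Xp).
move: E ge0; set r := complex.Re _ => -> ge0.
rewrite logc_r /xlnx; case: ifP => _; last by rewrite mulr0.
by rewrite Re_rM.
Qed.

End S6.

Section S7.
Variable R : realType.
Local Notation C := (R[i]).
Local Notation Op := (Op R).

Lemma ent_adj (T : finType) (X : Op T) x y : ent (adj X) x y = Num.conj (ent X y x).
Proof. by rewrite /ent !mxE. Qed.

Lemma ent_1 (T : finType) x y : ent (1%:M : Op T) x y = (x == y)%:R.
Proof. by rewrite /ent mxE (inj_eq enum_rank_inj). Qed.

Lemma sum_pair (P Q : finType) (F : P * Q -> C) : \sum_z F z = \sum_x \sum_y F (x, y).
Proof. by rewrite pair_bigA; apply: eq_bigr => -[]. Qed.

Lemma sum_delta (T : finType) (x : T) (F : T -> C) : \sum_y (x == y)%:R * F y = F x.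
Proof.
rewrite (bigD1 x) //= big1 ?addr0 ?eqxx ?mul1r //.
by move=> y /negbTE; rewrite eq_sym => ->; rewrite mul0r.
Qed.

Lemma sum_deltar (T : finType) (x : T) (F : T -> C) : \sum_y (y == x)%:R * F y = F x.
Proof. by rewrite -(sum_delta x); apply: eq_bigr => y _; rewrite eq_sym. Qed.

Lemma quad_ent (T : finType) (M : Op T) (u : 'rV[C]_#|T|) :
  (u *m M *m adj u) 0 0 =
  \sum_a \sum_b u 0 (enum_rank a) * ent M a b * Num.conj (u 0 (enum_rank b)).
Proof.
rewrite mxE sum_ordT exchange_big /=; apply: eq_bigr => b _.
rewrite mxE sum_ordT mulr_suml; apply: eq_bigr => a _.
by rewrite !mxE.
Qed.

Lemma ent_conj_diag (T : finType) (A B : Op T) (h : 'rV[C]_#|T|) z w :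
  ent (A^t* *m diag_mx h *m B) z w =
  \sum_u Num.conj (ent A u z) * h 0 (enum_rank u) * ent B u w.
Proof.
rewrite /ent mxE sum_ordT; apply: eq_bigr => u _.
by rewrite mul_mx_diag !mxE.
Qed.
End S7.

Section S8.
Variable R : realType.
Local Notation C := (R[i]).
Local Notation Op := (Op R).

Lemma sum_pair_delta (P Q : finType) (x : P) (F : P * Q -> C) :
  \sum_a (a.1 == x)%:R * F a = \sum_y F (x, y).
Proof.
rewrite sum_pair -(sum_deltar x (fun a1 => \sum_y F (a1, y))).
by apply: eq_bigr => a1 _; rewrite mulr_sumr.
Qed.

Lemma herm_ent (T : finType) (X : Op T) : adj X = X -> forall a b, ent X a b = Num.conj (ent X b a).
Proof. by move=> HX a b; rewrite -{1}HX ent_adj. Qed.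

Definition slice (P Q : finType) (x : P) (u : 'rV[C]_#|Q|) : 'rV[C]_#|{: P * Q}| :=
  \row_k (((enum_val k).1 == x)%:R * u 0 (enum_rank (enum_val k).2)).

Lemma slice_ent (P Q : finType) (x : P) (u : 'rV[C]_#|Q|) a :
  slice x u 0 (enum_rank a) = (a.1 == x)%:R * u 0 (enum_rank a.2).
Proof. by rewrite mxE enum_rankK. Qed.

Lemma quad_slice (P Q : finType) (X : Op (P * Q)%type) x u :
  (slice x u *m X *m adj (slice x u)) 0 0 =
  \sum_y \sum_y' u 0 (enum_rank y) * ent X (x, y) (x, y') * Num.conj (u 0 (enum_rank y')).
Proof.
rewrite quad_ent.
transitivity (\sum_a (a.1 == x)%:R * \sum_b (b.1 == x)%:R *
   (u 0 (enum_rank a.2) * ent X a b * Num.conj (u 0 (enum_rank b.2)))).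
  apply: eq_bigr => a _; rewrite mulr_sumr; apply: eq_bigr => b _.
  rewrite !slice_ent rmorphM /= rmorph_nat; ring.
rewrite sum_pair_delta; apply: eq_bigr => y _.
by rewrite sum_pair_delta; apply: eq_bigr.
Qed.

Lemma ptrace_psd (P Q : finType) (X : Op (P * Q)%type) : psd X -> psd (ptrace1 X).
Proof.
move=> [HX Hq]; split.
  apply: (@opP _ Q) => y y'; rewrite ent_adj !ent_opm rmorph_sum; apply: eq_bigr => x _.
  by rewrite [RHS](herm_ent HX).
move=> u.
have -> : (u *m ptrace1 X *m adj u) 0 0 = \sum_x (slice x u *m X *m adj (slice x u)) 0 0.
  rewrite quad_ent.
  transitivity (\sum_y \sum_y' \sum_x u 0 (enum_rank y) * ent X (x, y) (x, y') * Num.conj (u 0 (enum_rank y'))).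
    apply: eq_bigr => y _; apply: eq_bigr => y' _.
    by rewrite ent_opm mulr_sumr mulr_suml.
  rewrite exchange_big /=.
  transitivity (\sum_y' \sum_x \sum_y u 0 (enum_rank y) * ent X (x, y) (x, y') * Num.conj (u 0 (enum_rank y'))).
    by apply: eq_bigr => y' _; rewrite exchange_big.
  rewrite exchange_big /=; apply: eq_bigr => x _.
  by rewrite quad_slice exchange_big.
by apply: sumr_ge0 => x _; apply: Hq.
Qed.

Lemma ptrace_tr (P Q : finType) (X : Op (P * Q)%type) : \tr (ptrace1 X) = \tr X.
Proof.
rewrite !tr_ent sum_pair exchange_big /=; apply: eq_bigr => y _.
by rewrite ent_opm.
Qed.
End S8.

Section S9.
Variable R : realType.
Local Notation C := (R[i]).
Local Notation Op := (Op R).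
Variables P Q : finType.

Definition Wk (V : Op Q) : Op (P * Q)%type :=
  opm (fun z w : P * Q => (z.1 == w.1)%:R * ent V z.2 w.2).

Definition rowk (f : C -> C) (e : 'rV[C]_#|Q|) : 'rV[C]_#|{: P * Q}| :=
  \row_k f (e 0 (enum_rank (enum_val k).2)).

Lemma Wk_sandwich (V : Op Q) e f z w :
  ent ((Wk V)^t* *m diag_mx (rowk f e) *m Wk V) z w =
  (z.1 == w.1)%:R * ent (V^t* *m diag_mx (map_mx f e) *m V) z.2 w.2.
Proof.
rewrite !ent_conj_diag.
transitivity (\sum_u (u.1 == z.1)%:R * ((u.1 == w.1)%:R *
   (Num.conj (ent V u.2 z.2) * f (e 0 (enum_rank u.2)) * ent V u.2 w.2))).
  apply: eq_bigr => u _; rewrite /Wk !ent_opm /rowk mxE enum_rankK.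
  rewrite rmorphM /= rmorph_nat; ring.
rewrite sum_pair_delta mulr_sumr; apply: eq_bigr => y _.
by rewrite mxE.
Qed.

Lemma natb_and (a b : bool) : ((a && b)%:R : C) = a%:R * b%:R.
Proof. by case: a; case: b; rewrite /= ?mulr1 ?mulr0 ?mul1r ?mul0r. Qed.

Lemma Wk_unitary (V : Op Q) : V \is unitarymx -> Wk V \is unitarymx.
Proof.
move=> Vu; apply/unitarymxP; apply: (@opP _ (P * Q)%type) => z z'.
rewrite ent_mul ent_1.
have -> : (z == z') = (z.1 == z'.1) && (z.2 == z'.2) by case: z; case: z'.
rewrite natb_and.
transitivity (\sum_w (w.1 == z.1)%:R * ((z'.1 == w.1)%:R *
   (ent V z.2 w.2 * Num.conj (ent V z'.2 w.2)))).
  apply: eq_bigr => w _; rewrite -adjE ent_adj /Wk !ent_opm.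
  rewrite rmorphM /= rmorph_nat eq_sym; ring.
rewrite sum_pair_delta /= -mulr_sumr eq_sym; congr (_ * _).
rewrite -(@ent_1 R Q z.2 z'.2) -(unitary_r Vu) ent_mul; apply: eq_bigr => y _.
by rewrite -adjE ent_adj.
Qed.

Definition Ymat (c : R) (s : Op Q) : Op (P * Q)%type :=
  opm (fun z w : P * Q => (z.1 == w.1)%:R * (((c%:C)%C : C) * ent s z.2 w.2)).

Lemma scale_sandwich (s : Op Q) (c : C) : psd s ->
  forall a b, ent ((spectralmx s)^t* *m diag_mx (map_mx (fun x => c * x) (spectral_diag s)) *m spectralmx s) a b
   = c * ent s a b.
Proof.
move=> sp a b; rewrite [in RHS](psd_decomp sp) !ent_conj_diag mulr_sumr.
by apply: eq_bigr => u _; rewrite mxE; ring.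
Qed.

Lemma Y_decomp (c : R) (s : Op Q) : psd s ->
  Ymat c s = (Wk (spectralmx s))^t* *m
     diag_mx (rowk (fun x => (c%:C)%C * x) (spectral_diag s)) *m Wk (spectralmx s).
Proof.
move=> sp; apply: (@opP _ (P * Q)%type) => z w.
by rewrite Wk_sandwich scale_sandwich // /Ymat ent_opm.
Qed.

Lemma logY (c : R) (s : Op Q) : psd s ->
  fcalc (@logc R) (Ymat c s) =
  opm (fun z w : P * Q => (z.1 == w.1)%:R *
     ent ((spectralmx s)^t* *m diag_mx (map_mx (fun x => @logc R ((c%:C)%C * x)) (spectral_diag s)) *m spectralmx s) z.2 w.2).
Proof.
move=> sp.
rewrite (fcalc_uniq _ (Wk_unitary (spectral_unitarymx s)) (Y_decomp c sp)).
have -> : map_mx (@logc R) (rowk (fun x => (c%:C)%C * x) (spectral_diag s)) =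
          rowk (fun x => @logc R ((c%:C)%C * x)) (spectral_diag s).
  by apply/matrixP => i j; rewrite !mxE.
apply: (@opP _ (P * Q)%type) => z w.
by rewrite Wk_sandwich ent_opm.
Qed.

Lemma tr_kron_left (X : Op (P * Q)%type) (G : Op Q) :
  \tr (X *m opm (fun z w : P * Q => (z.1 == w.1)%:R * ent G z.2 w.2)) = \tr (ptrace1 X *m G).
Proof.
rewrite !tr_ent.
transitivity (\sum_z \sum_y' ent X z (z.1, y') * ent G y' z.2).
  apply: eq_bigr => z _; rewrite ent_mul -(sum_pair_delta z.1 (fun w => ent X z w * ent G w.2 z.2)); apply: eq_bigr => w _.
  rewrite ent_opm eq_sym; ring.
rewrite sum_pair exchange_big /=; apply: eq_bigr => y _.
rewrite ent_mul exchange_big /=; apply: eq_bigr => y' _.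
by rewrite ent_opm mulr_suml.
Qed.
End S9.

Section S10.
Variable R : realType.
Local Notation C := (R[i]).
Local Notation Op := (Op R).
Local Notation Re := (@complex.Re R).

Lemma support_lemma (Q : finType) (t s : Op Q) : psd t -> psd s -> (t <= s)%MS ->
  forall i j, spectral_diag s 0 j = 0 ->
  spectral_diag t 0 i * (spectralmx t *m (spectralmx s)^t*) i j = 0.
Proof.
move=> tp sp /submxP [D HD] i j ej.
set U := spectralmx t; set V := spectralmx s.
have Uu : U \is unitarymx by apply: spectral_unitarymx.
have Vu : V \is unitarymx by apply: spectral_unitarymx.
have E1 : U *m t *m V^t* = diag_mx (spectral_diag t) *m (U *m V^t*).
  rewrite {1}(psd_decomp tp) -/U !mulmxA unitary_r // mul1mx.
  by rewrite -!mulmxA.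
have E2 : U *m t *m V^t* = U *m D *m V^t* *m diag_mx (spectral_diag s).
  rewrite HD {1}(psd_decomp sp) -/V.
  rewrite !mulmxA -(mulmxA _ V) unitary_r // mulmx1.
  by rewrite -!mulmxA.
have /matrixP /(_ i j) := etrans (esym E1) E2.
by rewrite mul_diag_mx mul_mx_diag !mxE ej mulr0.
Qed.

Lemma sum_eig (T : finType) (t : Op T) : psd t -> \sum_i spectral_diag t 0 i = \tr t.
Proof.
move=> tp; rewrite {2}(psd_decomp tp) mxtrace_mulC mulmxA unitary_r ?spectral_unitarymx //.
by rewrite mul1mx mxtrace_diag.
Qed.

Lemma Wunit_rows n (W : 'M[C]_n) i : W \is unitarymx -> \sum_j W i j * Num.conj (W i j) = 1.
Proof.
move=> Wu; have /matrixP /(_ i i) := unitary_r Wu.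
by rewrite !mxE eqxx mulr1n => <-; apply: eq_bigr => j _; rewrite !mxE.
Qed.

Lemma Wunit_cols n (W : 'M[C]_n) j : W \is unitarymx -> \sum_i W i j * Num.conj (W i j) = 1.
Proof.
move=> Wu; have /matrixP /(_ j j) := unitary_l Wu.
by rewrite !mxE eqxx mulr1n => <-; apply: eq_bigr => i _; rewrite !mxE mulrC.
Qed.

Lemma sub_ptrace (P Q : finType) (X : Op (P * Q)%type) (s : Op Q) (c : R) :
  (X <= Ymat P c s)%MS -> (ptrace1 X <= s)%MS.
Proof.
move=> /submxP [D HD]; apply/submxP.
exists (opm (fun y y'' : Q => \sum_x ((c%:C)%C * ent D (x, y) (x, y'')))).
apply: (@opP _ Q) => y y'.
rewrite ent_opm HD ent_mul.
transitivity (\sum_x \sum_y'' ent D (x, y) (x, y'') * ((c%:C)%C * ent s y'' y')).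
  apply: eq_bigr => x _; rewrite ent_mul.
  rewrite -(sum_pair_delta x (fun w => ent D (x, y) w * ((c%:C)%C * ent s w.2 y'))).
  by apply: eq_bigr => w _; rewrite /Ymat ent_opm /= eq_sym; ring.
rewrite exchange_big /=; apply: eq_bigr => y'' _.
by rewrite ent_opm mulr_suml; apply: eq_bigr => x _; ring.
Qed.
End S10.

Section S11.
Variable R : realType.
Local Notation C := (R[i]).
Local Notation Op := (Op R).
Local Notation Re := (@complex.Re R).

Lemma core (P Q : finType) (X : Op (P * Q)%type) (s : Op Q) (c : R) :
  psd X -> \tr X = 1 -> psd s -> \tr s = 1 -> 0 < c -> (X <= Ymat P c s)%MS ->
  - ln c <= condS X + (Re (\tr (X *m fcalc (@logc R) X)) -
                        Re (\tr (X *m fcalc (@logc R) (Ymat P c s)))).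
Proof.
move=> Xp Xtr sp str c0 Xsub.
set t := ptrace1 X.
have tp : psd t by apply: ptrace_psd.
have ttr : \tr t = 1 by rewrite ptrace_tr.
have tsub : (t <= s)%MS by apply: sub_ptrace Xsub.
rewrite tr_xlogx // logY // tr_kron_left -/t.
rewrite {1}(psd_decomp tp) tr_formula.
set U := spectralmx t; set V := spectralmx s.
set d := spectral_diag t; set e := spectral_diag s.
set W := U *m V^t*.
have Wu : W \is unitarymx.
  by rewrite mul_unitarymx ?trmxC_unitary ?spectral_unitarymx.
pose dr i := Re (d 0 i). pose er j := Re (e 0 j).
pose wr i j := Re (W i j * Num.conj (W i j)).
have dE i : d 0 i = ((dr i)%:C)%C /\ 0 <= dr i by apply: Cge0_real; apply: psd_eig_ge0.
have eE j : e 0 j = ((er j)%:C)%C /\ 0 <= er j by apply: Cge0_real; apply: psd_eig_ge0.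
have wE i j : W i j * Num.conj (W i j) = ((wr i j)%:C)%C /\ 0 <= wr i j.
  by apply: Cge0_real; apply: mul_conjC_ge0.
have sumd : \sum_i dr i = 1.
  by rewrite -Re_sum sum_eig // ttr.
have sume : \sum_j er j = 1.
  by rewrite -Re_sum sum_eig // str.
have wrow i : \sum_j wr i j = 1 by rewrite -Re_sum Wunit_rows.
have wcol j : \sum_i wr i j = 1 by rewrite -Re_sum Wunit_cols.
have supp i j : 0 < dr i -> er j = 0 -> wr i j = 0.
  move=> di ej; have := support_lemma tp sp tsub i (j:=j).
  rewrite -/U -/V -/d -/e -/W.
  have -> : e 0 j = 0 by rewrite (proj1 (eE j)) ej.
  move=> /(_ erefl) /eqP; rewrite mulf_eq0 (proj1 (dE i)) => /orP[/eqP|/eqP Wij].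
    by move=> [] /eqP; rewrite gt_eqF.
  by rewrite /wr Wij mul0r.
pose K := \sum_i \sum_j dr i * wr i j * (if 0 < er j then ln (er j) else 0).
have HK : K <= \sum_i xlnx (dr i).
  by apply: klein => // i; [apply: (proj2 (dE i)) | apply: (proj2 (eE i)) | move=> j; apply: (proj2 (wE i j))].
have term i j : Re (d 0 i * map_mx (fun x => @logc R ((c%:C)%C * x)) e 0 j *
                    (W i j * Num.conj (W i j))) =
                dr i * wr i j * ln c + dr i * wr i j * (if 0 < er j then ln (er j) else 0).
  rewrite mxE; have [-> _] := dE i; have [-> ej0] := eE j; have [-> _] := wE i j.
  rewrite -rmorphM logc_r pmulr_rgt0 //.
  case: ifP => ej.
    by rewrite -!rmorphM Re_r lnM ?posrE //; ring.
  rewrite mulr0 mul0r /= mulr0 addr0.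
  have ej00 : er j = 0 by apply/le_anti; rewrite ej0 andbT leNgt ej.
  have [di|] := ltrP 0 (dr i); first by rewrite supp // mulr0 mul0r.
  move=> dle; have -> : dr i = 0 by apply/le_anti; rewrite dle (proj2 (dE i)).
  by rewrite !mul0r.
have HY : Re (\sum_i \sum_j d 0 i * map_mx (fun x => @logc R ((c%:C)%C * x)) e 0 j *
                    (W i j * Num.conj (W i j))) = ln c + K.
  rewrite Re_sum (eq_bigr (fun i => \sum_j (dr i * wr i j * ln c +
       dr i * wr i j * (if 0 < er j then ln (er j) else 0)))); last first.
    by move=> i _; rewrite Re_sum; apply: eq_bigr => j _; apply: term.
  rewrite (eq_bigr (fun i => dr i * ln c + \sum_j dr i * wr i j * (if 0 < er j then ln (er j) else 0))); last first.
    move=> i _; rewrite big_split /=; congr (_ + _).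
    by rewrite -mulr_suml -mulr_sumr wrow mulr1.
  by rewrite big_split /= -mulr_suml sumd mul1r.
rewrite HY /condS -/t.
have -> : vnS t = - \sum_i xlnx (dr i) by [].
lra.
Qed.
End S11.

Section S12.
Variable R : realType.
Local Notation C := (R[i]).
Local Notation Op := (Op R).

Lemma conj_rc (k : R) : Num.conj ((k%:C)%C : C) = (k%:C)%C.
Proof. by apply: conj_Creal; apply/complex_realP; exists k. Qed.

Lemma psd_outer (T : finType) (k : R) (g : T -> C) : 0 <= k ->
  psd (opm (fun p q => (k%:C)%C * (g p * Num.conj (g q))) : Op T).
Proof.
move=> k0; split.
  apply: (@opP _ T) => p q; rewrite ent_adj !ent_opm !rmorphM /= conjCK conj_rc.
  by ring.
move=> u; rewrite quad_ent.
have -> : \sum_a \sum_b u 0 (enum_rank a) *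
     ent (opm (fun p q => (k%:C)%C * (g p * Num.conj (g q))) : Op T) a b *
     Num.conj (u 0 (enum_rank b)) =
   (k%:C)%C * ((\sum_a u 0 (enum_rank a) * g a) * Num.conj (\sum_b u 0 (enum_rank b) * g b)).
  rewrite rmorph_sum; symmetry; rewrite mulr_suml mulr_sumr; apply: eq_bigr => a _.
  rewrite mulr_sumr mulr_sumr; apply: eq_bigr => b _.
  rewrite ent_opm rmorphM /=; ring.
by apply: mulr_ge0; [rewrite ler0c | apply: mul_conjC_ge0].
Qed.

Lemma ent_maxent (T : finType) p q :
  ent (maxent R T) p q = ((#|T|%:R^-1 : R)%:C)%C * ((p.1 == p.2)%:R * Num.conj ((q.1 == q.2)%:R)).
Proof.
rewrite /maxent ent_opm conjC_nat natb_and fmorphV rmorph_nat /=; ring.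
Qed.

Lemma maxent_outer (T : finType) : maxent R T =
  opm (fun p q => ((#|T|%:R^-1 : R)%:C)%C * ((p.1 == p.2)%:R * Num.conj ((q.1 == q.2)%:R))).
Proof. by apply: (@opP _ (T * T)%type) => p q; rewrite ent_maxent ent_opm. Qed.

Lemma psd_maxent (T : finType) : psd (maxent R T).
Proof. by rewrite maxent_outer; apply: psd_outer; rewrite invr_ge0 ler0n. Qed.

Lemma tr_maxent (T : finType) : (0 < #|T|)%N -> \tr (maxent R T) = 1.
Proof.
move=> T0; rewrite tr_ent sum_pair.
transitivity (\sum_(x : T) ((#|T|%:R^-1 : R)%:C)%C).
  apply: eq_bigr => x _.
  rewrite (eq_bigr (fun y => (x == y)%:R * ((#|T|%:R^-1 : R)%:C)%C)); last first.
    by move=> y _; rewrite ent_maxent conjC_nat /=; case: (x == y) => /=; ring.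
  by rewrite sum_delta.
rewrite sumr_const fmorphV rmorph_nat /=.
change (#|T|%:R^-1 *+ #|T| = 1 :> C).
by rewrite -[_ *+ #|T|]mulr_natr mulVf // pnatr_eq0 -lt0n.
Qed.

Lemma tr_tens (T1 T2 : finType) (X : Op T1) (Y : Op T2) : \tr (tens X Y) = \tr X * \tr Y.
Proof.
rewrite !tr_ent sum_pair mulr_suml; apply: eq_bigr => x _.
by rewrite mulr_sumr; apply: eq_bigr => y _; rewrite /tens ent_opm.
Qed.

Definition mid_inv (P Q U V : finType) (z : ((P * Q) * (U * V))%type) : ((P * U) * (Q * V))%type :=
  ((z.1.1, z.2.1), (z.1.2, z.2.2)).

Lemma mid_bij (P Q U V : finType) : bijective (@mid_idx P Q U V).
Proof. by exists (@mid_inv P Q U V) => -[[a b] [c d]]. Qed.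

Lemma sum_mid (P Q U V : finType) (F : ((P * Q) * (U * V))%type -> C) :
  \sum_z F (mid_idx z) = \sum_w F w.
Proof.
by rewrite [RHS](reindex (@mid_idx P Q U V)) //; apply: onW_bij; apply: mid_bij.
Qed.

Lemma tr_mid (P Q U V : finType) (X : Op ((P * Q) * (U * V))%type) : \tr (mid X) = \tr X.
Proof.
rewrite !tr_ent -(sum_mid (fun w => ent X w w)); apply: eq_bigr => z _.
by rewrite /mid ent_opm.
Qed.

Lemma psd_mid (P Q U V : finType) (X : Op ((P * Q) * (U * V))%type) : psd X -> psd (mid X).
Proof.
move=> [HX Hq]; split.
  apply: (@opP _ ((P * U) * (Q * V))%type) => z w.
  by rewrite ent_adj !ent_opm [RHS](herm_ent HX).
move=> u.
pose u' : 'rV[C]_#|{: (P * Q) * (U * V)}| := \row_k u 0 (enum_rank (mid_inv (enum_val k))).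
have := Hq u'; rewrite !quad_ent.
rewrite -(sum_mid (fun a => \sum_b u' 0 (enum_rank a) * ent X a b * Num.conj (u' 0 (enum_rank b)))).
under eq_bigr => a _ do rewrite -(sum_mid (fun b => u' 0 (enum_rank (mid_idx a)) * ent X (mid_idx a) b * Num.conj (u' 0 (enum_rank b)))).
congr (0 <= _); apply: eq_bigr => a _; apply: eq_bigr => b _.
rewrite /u' !mxE !enum_rankK /mid ent_opm.
by case: a => [[? ?] [? ?]]; case: b => [[? ?] [? ?]].
Qed.
End S12.

Section S13.
Variable R : realType.
Local Notation C := (R[i]).
Local Notation Op := (Op R).

Lemma ent_Eop (T : finType) (x y a b : T) : ent (Eop R x y) a b = ((a == x) && (b == y))%:R.
Proof. by rewrite /Eop ent_opm. Qed.

Lemma tr_Eop (T : finType) (x y : T) : \tr (Eop R x y) = (x == y)%:R.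
Proof.
rewrite tr_ent -(sum_delta x (fun a => (a == y)%:R)); apply: eq_bigr => a _.
by rewrite ent_Eop natb_and eq_sym.
Qed.

Lemma tensmap_id_ent (RR Y1 Y2 : finType) (K : Op Y1 -> Op Y2) (Z : Op (RR * Y1)%type) r r' a a' :
  ent (tensmap (@idmap R RR) K Z) (r, a) (r', a') =
  \sum_y \sum_y' ent Z (r, y) (r', y') * ent (K (Eop R y y')) a a'.
Proof.
rewrite /tensmap ent_opm /=.
transitivity (\sum_x (r == x)%:R * \sum_x' (r' == x')%:R *
   \sum_y \sum_y' ent Z (x, y) (x', y') * ent (K (Eop R y y')) a a').
  apply: eq_bigr => x _; rewrite mulr_sumr; apply: eq_bigr => x' _.
  rewrite !mulr_sumr; apply: eq_bigr => y _; rewrite !mulr_sumr; apply: eq_bigr => y' _.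
  rewrite /idmap ent_Eop natb_and; ring.
by rewrite sum_delta sum_delta.
Qed.

Lemma tr_tensmap_id (RR Y1 Y2 : finType) (K : Op Y1 -> Op Y2) (Z : Op (RR * Y1)%type) :
  is_TP K -> \tr (tensmap (@idmap R RR) K Z) = \tr Z.
Proof.
move=> KTP; rewrite !tr_ent !sum_pair; apply: eq_bigr => r _.
transitivity (\sum_y \sum_y' ent Z (r, y) (r, y') * \tr (K (Eop R y y'))).
  transitivity (\sum_a \sum_y \sum_y' ent Z (r, y) (r, y') * ent (K (Eop R y y')) a a).
    by apply: eq_bigr => a _; rewrite tensmap_id_ent.
  rewrite exchange_big /=; apply: eq_bigr => y _.
  rewrite exchange_big /=; apply: eq_bigr => y' _.
  by rewrite tr_ent mulr_sumr.
apply: eq_bigr => y _.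
rewrite -(sum_delta y (fun y' => ent Z (r, y) (r, y'))); apply: eq_bigr => y' _.
by rewrite KTP tr_Eop mulrC.
Qed.

Lemma ent_trmap (T1 T2 : finType) (Y : Op T1) (a a' : T2) :
  ent (trmap T2 Y) a a' = \tr Y * (a == a')%:R.
Proof.
rewrite /trmap /ent !mxE (inj_eq enum_rank_inj).
by case: (a == a'); rewrite /= ?mulr1n ?mulr0n ?mulr1 ?mulr0.
Qed.

Lemma tensmap_trmap_ent (A' B' A B : finType) (M : Op B' -> Op B) (y y' : A' * B') a b a' b' :
  ent (tensmap (@trmap R A' A) M (Eop R y y')) (a, b) (a', b') =
  (y.1 == y'.1)%:R * ((a == a')%:R * ent (M (Eop R y.2 y'.2)) b b').
Proof.
move: y y' => [y1 y2] [y1' y2'].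
rewrite /tensmap ent_opm /=.
transitivity (\sum_x (y1 == x)%:R * \sum_x' (y1' == x')%:R * \sum_u (y2 == u)%:R *
   \sum_u' (y2' == u')%:R * (ent (trmap A (Eop R x x')) a a' * ent (M (Eop R u u')) b b')).
  apply: eq_bigr => x _; rewrite mulr_sumr; apply: eq_bigr => x' _.
  rewrite !mulr_sumr; apply: eq_bigr => u _; rewrite !mulr_sumr; apply: eq_bigr => u' _.
  rewrite ent_Eop !xpair_eqE !natb_and (eq_sym x) (eq_sym x') (eq_sym u) (eq_sym u'); ring.
rewrite sum_delta sum_delta sum_delta sum_delta ent_trmap tr_Eop; ring.
Qed.
End S13.

Section S14.
Variable R : realType.
Local Notation C := (R[i]).
Local Notation Op := (Op R).

Lemma Y_eq (A' B' A B : finType) (M : Op B' -> Op B) :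
  bimap (tensmap (@trmap R A' A) M) (tens (maxent R A') (maxent R B')) =
  Ymat (A' * A)%type (#|A'|%:R^-1) (tensmap (@idmap R B') M (maxent R B')).
Proof.
apply: (@opP _ ((A' * A) * (B' * B))%type) => -[[ra a] [rb b]] -[[ra' a'] [rb' b']].
rewrite /bimap {1}/mid ent_opm /mid_idx /= tensmap_id_ent.
rewrite /Ymat ent_opm /= tensmap_id_ent.
set k := (((#|A'|%:R^-1 : R)%:C)%C : C).
set S := (X in _ = _ * (_ * X)).
transitivity (\sum_y1 (ra == y1)%:R * \sum_y1' (ra' == y1')%:R *
   ((y1 == y1')%:R * ((a == a')%:R * (k * S)))).
  rewrite sum_pair; apply: eq_bigr => y1 _.
  rewrite exchange_big sum_pair /= mulr_sumr; apply: eq_bigr => y1' _.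
  rewrite exchange_big /= /S !mulr_sumr; apply: eq_bigr => y2 _.
  rewrite !mulr_sumr; apply: eq_bigr => y2' _.
  rewrite /mid ent_opm /mid_idx /= /tens ent_opm /= !ent_maxent tensmap_trmap_ent /= !conjC_nat.
  rewrite /k; ring.
rewrite sum_delta sum_delta xpair_eqE natb_and /k; ring.
Qed.

Lemma psd_midtens (T1 T2 : finType) : psd (mid (tens (maxent R T1) (maxent R T2))).
Proof.
pose g (z : ((T1 * T2) * (T1 * T2))%type) : C := (z.1.1 == z.2.1)%:R * (z.1.2 == z.2.2)%:R.
have -> : mid (tens (maxent R T1) (maxent R T2)) =
   opm (fun z w => (((#|T1|%:R^-1 * #|T2|%:R^-1 : R))%:C)%C * (g z * Num.conj (g w))).
  apply: (@opP _ ((T1 * T2) * (T1 * T2))%type) => z w.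
  rewrite /mid ent_opm /tens ent_opm !ent_maxent ent_opm /g /mid_idx /=.
  rewrite !rmorphM /= !conjC_nat.
  ring.
by apply: psd_outer; rewrite mulr_ge0 // invr_ge0 ler0n.
Qed.
End S14.

Section S15.
Variable R : realType.
Local Notation C := (R[i]).
Local Notation Op := (Op R).

Lemma psd_bimap (A' B' A B RA RB : finType) (K : Op (A' * B')%type -> Op (A * B)%type)
   (Z : Op ((RA * A') * (RB * B'))%type) :
  is_CP K -> psd (mid Z) -> psd (bimap K Z).
Proof. by move=> KCP Zp; apply: psd_mid; apply: KCP. Qed.

Lemma tr_bimap (A' B' A B RA RB : finType) (K : Op (A' * B')%type -> Op (A * B)%type)
   (Z : Op ((RA * A') * (RB * B'))%type) :
  is_TP K -> \tr (bimap K Z) = \tr Z.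
Proof. by move=> KTP; rewrite /bimap tr_mid tr_tensmap_id // tr_mid. Qed.

Lemma relent_bound (A' B' A B : finType) (N : Op (A' * B')%type -> Op (A * B)%type)
   (M : Op B' -> Op B) :
  (0 < #|A'|)%N -> (0 < #|B'|)%N -> is_channel N -> is_channel M ->
  ((ln (#|A'|%:R : R) - condS (choi N))%:E <=
    relent (choi N) (bimap (tensmap (@trmap R A' A) M) (tens (maxent R A') (maxent R B'))))%E.
Proof.
move=> A0 B0 [_ NCP NTP] [_ MCP MTP].
set X := choi N.
have Xp : psd X by apply: psd_bimap => //; apply: psd_midtens.
have Xtr : \tr X = 1 by rewrite tr_bimap // tr_tens !tr_maxent // mulr1.
set s := tensmap (@idmap R B') M (maxent R B').
have sp : psd s by apply: MCP; apply: psd_maxent.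
have str : \tr s = 1 by rewrite tr_tensmap_id // tr_maxent.
have c0 : 0 < (#|A'|%:R^-1 : R) by rewrite invr_gt0 ltr0n.
rewrite Y_eq /relent -/s.
case: ifP => Hsub; last by rewrite leey.
rewrite lee_fin.
have := core Xp Xtr sp str c0 Hsub.
rewrite lnV ?posrE ?ltr0n // opprK.
lra.
Qed.

End S15.

Unset Implicit Arguments.

Theorem mainTheorem18 (R : realType) (A' B' A B : finType)
    (N : Op R (A' * B')%type -> Op R (A * B)%type) :
  (0 < #|A'|)%N -> (0 < #|B'|)%N -> is_channel N ->
  ((ln (#|A'|%:R : R))%:E <= (condS (choi N))%:E - biS N)%E.
Proof.
move=> A0 B0 Nch.
set L := ln (#|A'|%:R : R); set cs := condS (choi N).
have Hlb : ((L - cs)%:E <= ereal_inf [set d | exists M : Op R B' -> Op R B,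
       is_channel M /\ d = bidiv N (tensmap (@trmap R A' A) M)])%E.
  apply: le_ereal_inf_tmp => d [M [Mch ->]].
  apply: le_trans (relent_bound A0 B0 Nch Mch) _.
  apply: ereal_sup_ubound.
  exists A', B', (maxent R A'), (maxent R B'); split => //.
    by split; [apply: psd_maxent | apply: tr_maxent].
  by split; [apply: psd_maxent | apply: tr_maxent].
rewrite /biS oppeK.
move: Hlb; case: (ereal_inf _) => [r| |] //=.
  by rewrite -EFinD !lee_fin; lra.
by move=> _; rewrite addey // leey.
Qed.
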